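(* Let $(X,\mathcal U)$ be a $\Delta$-rotund quasi-uniform space (respectively, a $\Delta$-rotund uniform space), with $X$ carrying the topology $\tau_{\mathcal U}$. Then for every entourage $U\in\mathcal U$ there is a right-continuous $\mathcal U$-uniform quasi-pseudometric (respectively, pseudometric) $p:X\times X\to[0,1]$ such that $B_p(x,1)\subset\overline{B(x;U)}^\circ$ for every $x\in X$.
   Context: Entourages, $U\circ V$, $U^{-1}$, $B(x;U)=\{y:(x,y)\in U\}$. A quasi-uniformity on $X$ is a family $\mathcal U$ of subsets of $X\times X$ containing the diagonal, closed under supersets, any two members containing a common member, and such that for each $U\in\mathcal U$ some $V\in\mathcal U$ has $V\circ V\subset U$; it is a uniformity if moreover $U^{-1}\in\mathcal U$ for all $U\in\mathcal U$. Its topology $\tau_{\mathcal U}$: $W$ is open iff for every $x\in W$ some $U\in\mathcal U$ satisfies $B(x;U)\subset W$. $\overline S^\circ$ denotes the interior of the closure. A base $\mathcal B\subset\mathcal U$ (every member of $\mathcal U$ contains one from $\mathcal B$) is multiplicative if closed under $\circ$, and $\Delta$-rotund if $B(\overline{B(x;V)};U)\subset\overline{B(x;V\circ W\circ U)}$ for all $x\in X$, $U,V,W\in\mathcal B$ (where $B(A;U)=\bigcup_{a\in A}B(a;U)$). $(X,\mathcal U)$ is $\Delta$-rotund if $\mathcal U$ has a $\Delta$-rotund multiplicative base. A premetric $p$ ($p(x,x)=0$) is $\mathcal U$-uniform if $\{(x,y):p(x,y)<\varepsilon\}\in\mathcal U$ for every $\varepsilon>0$; right-continuous if $y\mapsto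 p(x,y)$ is continuous for each $x$; a quasi-pseudometric satisfies the triangle inequality; a pseudometric is a symmetric quasi-pseudometric. $B_p(x,1)=\{y:p(x,y)<1\}$. *)

(* Defs.v *)
From Stdlib Require Import Reals.
Open Scope R_scope.

Definition rel (X : Type) := X -> X -> Prop.

Definition rcomp {X : Type} (U V : rel X) : rel X :=
  fun x z => exists y, U x y /\ V y z.

Definition rinv {X : Type} (U : rel X) : rel X := fun x y => U y x.

Definition ball {X : Type} (x : X) (U : rel X) : X -> Prop := fun y => U x y.

Definition ballS {X : Type} (A : X -> Prop) (U : rel X) : X -> Prop :=
  fun y => exists a, A a /\ U a y.

Definition subset {X : Type} (A B : X -> Prop) : Prop := forall x, A x -> B x.

Definition rsubset {X : Type} (U V : rel X) : Prop := forall x y, U x y -> V x y.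

Definition is_quasi_uniformity {X : Type} (UU : rel X -> Prop) : Prop :=
  (forall U, UU U -> forall x, U x x) /\
  (forall U V, UU U -> rsubset U V -> UU V) /\
  (forall U V, UU U -> UU V -> exists W, UU W /\ rsubset W U /\ rsubset W V) /\
  (forall U, UU U -> exists V, UU V /\ rsubset (rcomp V V) U).

Definition is_uniformity {X : Type} (UU : rel X -> Prop) : Prop :=
  is_quasi_uniformity UU /\ (forall U, UU U -> UU (rinv U)).

Definition uopen {X : Type} (UU : rel X -> Prop) (W : X -> Prop) : Prop :=
  forall x, W x -> exists U, UU U /\ subset (ball x U) W.

Definition uclosure {X : Type} (UU : rel X -> Prop) (S : X -> Prop) : X -> Prop :=
  fun x => forall W, uopen UU W -> W x -> exists y, W y /\ S y.

Definition uinterior {X : Type} (UU : rel X -> Prop) (S : X -> Prop) : X -> Prop :=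
  fun x => exists W, uopen UU W /\ W x /\ subset W S.

Definition is_base {X : Type} (UU : rel X -> Prop) (BB : rel X -> Prop) : Prop :=
  (forall U, BB U -> UU U) /\
  (forall U, UU U -> exists V, BB V /\ rsubset V U).

Definition multiplicative {X : Type} (BB : rel X -> Prop) : Prop :=
  forall U V, BB U -> BB V -> BB (rcomp U V).

Definition delta_rotund_base {X : Type} (UU : rel X -> Prop) (BB : rel X -> Prop) : Prop :=
  forall x U V W, BB U -> BB V -> BB W ->
    subset (ballS (uclosure UU (ball x V)) U)
           (uclosure UU (ball x (rcomp (rcomp V W) U))).

Definition delta_rotund {X : Type} (UU : rel X -> Prop) : Prop :=
  exists BB, is_base UU BB /\ multiplicative BB /\ delta_rotund_base UU BB.

Definition premetric {X : Type} (p : X -> X -> R) : Prop := forall x, p x x = 0.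

Definition uniform_premetric {X : Type} (UU : rel X -> Prop) (p : X -> X -> R) : Prop :=
  forall eps, 0 < eps -> UU (fun x y => p x y < eps).

Definition R_open (O : R -> Prop) : Prop :=
  forall r, O r -> exists e, 0 < e /\ forall s, Rabs (s - r) < e -> O s.

Definition ucontinuous {X : Type} (UU : rel X -> Prop) (f : X -> R) : Prop :=
  forall O, R_open O -> uopen UU (fun y => O (f y)).

Definition right_continuous {X : Type} (UU : rel X -> Prop) (p : X -> X -> R) : Prop :=
  forall x, ucontinuous UU (p x).

Definition quasi_pseudometric {X : Type} (p : X -> X -> R) : Prop :=
  premetric p /\ forall x y z, p x z <= p x y + p y z.

Definition pseudometric {X : Type} (p : X -> X -> R) : Prop :=
  quasi_pseudometric p /\ forall x y, p x y = p y x.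

Definition unit_valued {X : Type} (p : X -> X -> R) : Prop :=
  forall x y, 0 <= p x y <= 1.

Definition pball1 {X : Type} (p : X -> X -> R) (x : X) : X -> Prop :=
  fun y => p x y < 1.

(* Main.v *)
Require Import Defs.
From Stdlib Require Import Reals Lra Lia Psatz ZArith ClassicalEpsilon Classical.
From Coquelicot Require Rbar Lub.
Open Scope R_scope.

Definition infR (S : R -> Prop) : R := Rbar.real (Lub.Glb_Rbar S).
Definition supR (S : R -> Prop) : R := Rbar.real (Lub.Lub_Rbar S).

Lemma infR_fin S r0 : (forall r, S r -> 0 <= r) -> S r0 ->
  exists v, Lub.Glb_Rbar S = Rbar.Finite v /\ 0 <= v /\
   (forall r, S r -> v <= r) /\ (forall c, (forall r, S r -> c <= r) -> c <= v).
Proof.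
  intros H0 Hr0. destruct (Lub.Glb_Rbar_correct S) as [Hlb Hgl].
  assert (H1 : Rbar.Rbar_le (Rbar.Finite 0) (Lub.Glb_Rbar S)).
  { apply Hgl. intros x Hx. simpl. apply H0; auto. }
  pose proof (Hlb r0 Hr0) as H2.
  destruct (Lub.Glb_Rbar S) as [v| |] eqn:E; simpl in *; try contradiction.
  exists v. split; [reflexivity|]. split; [exact H1|]. split.
  - intros r Hr. exact (Hlb r Hr).
  - intros c Hc. apply (Hgl (Rbar.Finite c)). intros x Hx. simpl. auto.
Qed.

Lemma infR_le S r0 r : (forall r, S r -> 0 <= r) -> S r0 -> S r -> infR S <= r.
Proof. intros H0 H1 H2. destruct (infR_fin S r0 H0 H1) as [v [E [_ [A _]]]].
  unfold infR; rewrite E; simpl; auto. Qed.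

Lemma infR_ge S r0 c : (forall r, S r -> 0 <= r) -> S r0 -> (forall r, S r -> c <= r) -> c <= infR S.
Proof. intros H0 H1 H2. destruct (infR_fin S r0 H0 H1) as [v [E [_ [_ A]]]].
  unfold infR; rewrite E; simpl; auto. Qed.

Lemma infR_nonneg S r0 : (forall r, S r -> 0 <= r) -> S r0 -> 0 <= infR S.
Proof. intros H0 H1. destruct (infR_fin S r0 H0 H1) as [v [E [A _]]].
  unfold infR; rewrite E; simpl; auto. Qed.

Lemma infR_lt S r0 t : (forall r, S r -> 0 <= r) -> S r0 -> infR S < t -> exists r, S r /\ r < t.
Proof. intros H0 H1 H2. apply NNPP; intro Hn.
  assert (t <= infR S). { apply (infR_ge S r0); auto. intros r Hr.
    apply Rnot_lt_le; intro; apply Hn; eauto. } lra. Qed.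

Lemma supR_fin S r0 : (forall r, S r -> r <= 1) -> S r0 ->
  exists v, Lub.Lub_Rbar S = Rbar.Finite v /\
   (forall r, S r -> r <= v) /\ (forall c, (forall r, S r -> r <= c) -> v <= c).
Proof.
  intros H0 Hr0. destruct (Lub.Lub_Rbar_correct S) as [Hub Hl].
  assert (H1 : Rbar.Rbar_le (Lub.Lub_Rbar S) (Rbar.Finite 1)).
  { apply Hl. intros x Hx. simpl. apply H0; auto. }
  pose proof (Hub r0 Hr0) as H2.
  destruct (Lub.Lub_Rbar S) as [v| |] eqn:E; simpl in *; try contradiction.
  exists v. split; [reflexivity|]. split.
  - intros r Hr. exact (Hub r Hr).
  - intros c Hc. apply (Hl (Rbar.Finite c)). intros x Hx. simpl. auto.
Qed.

Lemma supR_ge S r0 r : (forall r, S r -> r <= 1) -> S r0 -> S r -> r <= supR S.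
Proof. intros H0 H1 H2. destruct (supR_fin S r0 H0 H1) as [v [E [A _]]].
  unfold supR; rewrite E; simpl; auto. Qed.

Lemma supR_le S r0 c : (forall r, S r -> r <= 1) -> S r0 -> (forall r, S r -> r <= c) -> supR S <= c.
Proof. intros H0 H1 H2. destruct (supR_fin S r0 H0 H1) as [v [E [_ A]]].
  unfold supR; rewrite E; simpl; auto. Qed.

Lemma supR_gt S r0 t : (forall r, S r -> r <= 1) -> S r0 -> t < supR S -> exists r, S r /\ t < r.
Proof. intros H0 H1 H2. apply NNPP; intro Hn.
  assert (supR S <= t). { apply (supR_le S r0); auto. intros r Hr.
    apply Rnot_lt_le; intro; apply Hn; eauto. } lra. Qed.

Lemma pow2_pos n : 0 < 2 ^ n.
Proof. apply pow_lt; lra. Qed.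

Lemma small_pow e c : 0 < e -> 0 < c -> exists m : nat, c / 2 ^ m < e.
Proof.
  intros He Hc. destruct (pow_lt_1_zero (/2)) with (y := e / c) as [N HN].
  { rewrite Rabs_pos_eq; lra. } { apply Rdiv_lt_0_compat; lra. }
  exists N. specialize (HN N (le_n _)). rewrite Rabs_pos_eq in HN.
  2:{ apply pow_le; lra. }
  rewrite pow_inv in HN. pose proof (pow2_pos N).
  unfold Rdiv in *. apply (Rmult_lt_compat_l c) in HN; auto.
  replace (c * (e * / c)) with e in HN by (field; lra). lra.
Qed.

Lemma INR_pow2 n : INR (2 ^ n) = 2 ^ n.
Proof. rewrite pow_INR. reflexivity. Qed.
Fixpoint E {X : Type} (V : nat -> rel X) (k n : nat) : rel X :=
  match n with
  | O => if Nat.eqb k 0 then (fun a b => a = b) else V O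
  | S n' => if Nat.even k then E V (Nat.div2 k) n'
            else if Nat.eqb (Nat.div2 k) 0 then V (S n')
                 else rcomp (E V (Nat.div2 k) n') (V (S n'))
  end.

Lemma E_even {X} (V : nat -> rel X) j n : E V (2 * j) (S n) = E V j n.
Proof. change (E V (2 * j) (S n)) with (if Nat.even (2*j) then E V (Nat.div2 (2*j)) n
            else if Nat.eqb (Nat.div2 (2*j)) 0 then V (S n)
                 else rcomp (E V (Nat.div2 (2*j)) n) (V (S n))).
  rewrite Nat.even_even, Nat.div2_double. reflexivity. Qed.

Lemma E_odd {X} (V : nat -> rel X) j n : E V (S (2 * j)) (S n) =
  if Nat.eqb j 0 then V (S n) else rcomp (E V j n) (V (S n)).
Proof. change (E V (S (2 * j)) (S n)) with (if Nat.even (S (2*j)) then E V (Nat.div2 (S (2*j))) n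
            else if Nat.eqb (Nat.div2 (S (2*j))) 0 then V (S n)
                 else rcomp (E V (Nat.div2 (S (2*j))) n) (V (S n))).
  rewrite Nat.even_succ, Nat.odd_mul, Nat.div2_succ_double. reflexivity. Qed.

Lemma E_zero {X} (V : nat -> rel X) n : E V 0 n = (fun a b => a = b).
Proof. induction n; [reflexivity|]. change 0%nat with (2 * 0)%nat. rewrite E_even. exact IHn. Qed.

Lemma parity k : exists j, k = (2 * j)%nat \/ k = S (2 * j).
Proof. destruct (Nat.Even_or_Odd k) as [[j Hj]|[j Hj]]; exists j; lia. Qed.

Lemma E_refl {X} (V : nat -> rel X) (Hr : forall n x, V n x x) k n x : E V k n x x.
Proof.
  revert k; induction n; intro k.
  - simpl. destruct (Nat.eqb k 0); auto.
  - destruct (parity k) as [j [-> | ->]].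
    + rewrite E_even; auto.
    + rewrite E_odd. destruct (Nat.eqb j 0); auto. exists x; auto.
Qed.

Lemma E_BB {X} (BB : rel X -> Prop) (V : nat -> rel X) (HB : forall n, BB (V n))
  (Hm : multiplicative BB) k n : (1 <= k)%nat -> BB (E V k n).
Proof.
  revert k; induction n; intros k Hk.
  - simpl. destruct (Nat.eqb_spec k 0); [lia|auto].
  - destruct (parity k) as [j [-> | ->]].
    + rewrite E_even; apply IHn; lia.
    + rewrite E_odd. destruct (Nat.eqb_spec j 0); auto. apply Hm; auto. apply IHn; lia.
Qed.

Lemma E_step {X} (V : nat -> rel X) (Hc : forall n, rsubset (rcomp (V (S n)) (V (S n))) (V n)) n :
  forall k, (k < 2 ^ n)%nat -> rsubset (rcomp (E V k n) (V n)) (E V (S k) n).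
Proof.
  induction n; intros k Hk.
  - simpl in Hk. assert (k = 0%nat) by lia; subst. simpl.
    intros a b [c [-> H]]; auto.
  - destruct (parity k) as [j [-> | ->]].
    + rewrite E_even, E_odd. destruct (Nat.eqb_spec j 0).
      * subst. rewrite E_zero. intros a b [c [-> H]]; auto.
      * intros a b H; exact H.
    + replace (S (S (2 * j))) with (2 * S j)%nat by lia. rewrite E_even, E_odd.
      assert (Hj : (j < 2 ^ n)%nat) by (simpl in Hk; lia).
      specialize (IHn j Hj).
      destruct (Nat.eqb_spec j 0).
      * subst. intros a b [c [H1 H2]]. apply IHn. exists a. rewrite E_zero. split; auto.
        apply Hc. exists c; auto.
      * intros a b [c [[d [H1 H2]] H3]]. apply IHn. exists d. split; auto.
        apply Hc. exists c; auto.
Qed.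

Lemma E_mono {X} (V : nat -> rel X) (Hr : forall n x, V n x x)
  (Hc : forall n, rsubset (rcomp (V (S n)) (V (S n))) (V n)) n k k' :
  (k <= k')%nat -> (k' <= 2 ^ n)%nat -> rsubset (E V k n) (E V k' n).
Proof.
  intros H1. induction H1; intro H2.
  - intros a b h; exact h.
  - intros a b h. apply (E_step V Hc n m); [lia|]. exists b. split; [|apply Hr].
    apply IHle; [lia|exact h].
Qed.

Lemma E_lift {X} (V : nat -> rel X) k n j : E V k n = E V (k * 2 ^ j) (n + j).
Proof.
  induction j.
  - rewrite Nat.mul_1_r, Nat.add_0_r. reflexivity.
  - rewrite IHj. replace (k * 2 ^ S j)%nat with (2 * (k * 2 ^ j))%nat by (simpl; lia).
    replace (n + S j)%nat with (S (n + j)) by lia. rewrite E_even. reflexivity.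
Qed.

Lemma E_top {X} (V : nat -> rel X) n : E V (2 ^ n) n = V O.
Proof. pose proof (E_lift V 1 0 n) as H. rewrite Nat.mul_1_l, Nat.add_0_l in H.
  rewrite <- H. reflexivity. Qed.

Lemma E_cross {X} (V : nat -> rel X) (Hr : forall n x, V n x x)
  (Hc : forall n, rsubset (rcomp (V (S n)) (V (S n))) (V n)) k n k' n' :
  (k * 2 ^ n' <= k' * 2 ^ n)%nat -> (k' <= 2 ^ n')%nat -> rsubset (E V k n) (E V k' n').
Proof.
  intros H1 H2. rewrite (E_lift V k n n'), (E_lift V k' n' n).
  replace (n' + n)%nat with (n + n')%nat by lia.
  apply E_mono; auto. rewrite Nat.pow_add_r.
  apply Nat.mul_le_mono_r with (p := (2 ^ n)%nat) in H2. lia.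
Qed.
Lemma cl_incl {X} (UU : rel X -> Prop) S x : S x -> uclosure UU S x.
Proof. intros H W _ HW. exists x; auto. Qed.

Lemma cl_mono {X} (UU : rel X -> Prop) (S T : X -> Prop) : subset S T -> subset (uclosure UU S) (uclosure UU T).
Proof. intros H x Hx W HW Wx. destruct (Hx W HW Wx) as [y [Hy1 Hy2]]. exists y; auto. Qed.

Lemma cl_idem {X} (UU : rel X -> Prop) (S : X -> Prop) : subset (uclosure UU (uclosure UU S)) (uclosure UU S).
Proof. intros x Hx W HW Wx. destruct (Hx W HW Wx) as [y [Hy1 Hy2]]. apply (Hy2 W HW Hy1). Qed.

Lemma ball_mono {X} (x : X) (A B : rel X) : rsubset A B -> subset (ball x A) (ball x B).
Proof. intros H y. unfold ball. apply H. Qed.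

Lemma dy_lt k' n' k n : INR k' / 2 ^ n' < INR k / 2 ^ n -> (k' * 2 ^ n <= k * 2 ^ n')%nat.
Proof.
  intro H. pose proof (pow2_pos n). pose proof (pow2_pos n').
  assert (Hq : INR k' * 2 ^ n < INR k * 2 ^ n').
  { unfold Rdiv in H. apply (Rmult_lt_compat_r (2^n * 2^n')) in H; [|nra].
    replace (INR k' * / 2 ^ n' * (2 ^ n * 2 ^ n')) with (INR k' * 2^n) in H by (field; lra).
    replace (INR k * / 2 ^ n * (2 ^ n * 2 ^ n')) with (INR k * 2^n') in H by (field; lra). exact H. }
  rewrite <- !INR_pow2, <- !mult_INR in Hq. apply INR_lt in Hq. lia.
Qed.

Lemma ceil_ex k n m : (1 <= k)%nat -> (k <= 2 ^ n)%nat ->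
  exists j, (1 <= j)%nat /\ (j <= 2 ^ m)%nat /\ (k * 2 ^ m <= j * 2 ^ n)%nat /\ (j * 2 ^ n < k * 2 ^ m + 2 ^ n)%nat.
Proof.
  intros Hk1 Hk2. assert (HA : (0 < 2 ^ n)%nat) by (apply Nat.neq_0_lt_0, Nat.pow_nonzero; lia).
  assert (HB : (0 < 2 ^ m)%nat) by (apply Nat.neq_0_lt_0, Nat.pow_nonzero; lia).
  set (A := (2 ^ n)%nat) in *. set (B := (2 ^ m)%nat) in *.
  set (N := (k * B + A - 1)%nat).
  pose proof (Nat.div_mod N A ltac:(lia)) as Hd. pose proof (Nat.mod_upper_bound N A ltac:(lia)) as Hm.
  set (j := (N / A)%nat) in *. set (r := (N mod A)%nat) in *.
  exists j. assert (k * B <= j * A)%nat by nia. assert (j * A < k * B + A)%nat by nia.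
  split; [nia|]. split; [|split]; auto. nia.
Qed.

Lemma real_ceil j k n m : (j * 2 ^ n < k * 2 ^ m + 2 ^ n)%nat ->
  INR (S (S j)) / 2 ^ m <= INR k / 2 ^ n + 3 / 2 ^ m.
Proof.
  intro H. apply lt_INR in H. rewrite plus_INR, !mult_INR, !INR_pow2 in H.
  pose proof (pow2_pos n). pose proof (pow2_pos m).
  rewrite !S_INR. apply (Rmult_le_reg_r (2^n * 2^m)); [nra|].
  replace ((INR j + 1 + 1) / 2 ^ m * (2 ^ n * 2 ^ m)) with ((INR j + 2) * 2^n) by (field; lra).
  replace ((INR k / 2 ^ n + 3 / 2 ^ m) * (2 ^ n * 2 ^ m)) with (INR k * 2^m + 3 * 2^n) by (field; lra).
  nra.
Qed.

Lemma dyadic_between s t : 0 <= s -> s < t -> t <= 1 ->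
  exists k n, (1 <= k)%nat /\ (k <= 2 ^ n)%nat /\ s < INR k / 2 ^ n /\ INR k / 2 ^ n < t.
Proof.
  intros H1 H2 H3. destruct (small_pow (t - s) 1) as [m Hm]; try lra.
  pose proof (pow2_pos m).
  destruct (archimed (s * 2 ^ m)) as [A1 A2].
  assert (Hup : (0 < up (s * 2 ^ m))%Z) by (apply lt_0_IZR; nra).
  exists (Z.to_nat (up (s * 2 ^ m))), m.
  assert (HI : INR (Z.to_nat (up (s * 2 ^ m))) = IZR (up (s * 2 ^ m))).
  { rewrite INR_IZR_INZ, Z2Nat.id; [reflexivity | lia]. }
  assert (Hlt : INR (Z.to_nat (up (s * 2 ^ m))) / 2 ^ m < t).
  { rewrite HI. apply (Rmult_lt_reg_r (2^m)); auto.
    replace (IZR (up (s * 2 ^ m)) / 2 ^ m * 2 ^ m) with (IZR (up (s * 2 ^ m))) by (field; lra).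
    unfold Rdiv in Hm. rewrite Rmult_1_l in Hm.
    assert (1 < (t - s) * 2 ^ m).
    { apply (Rmult_lt_compat_r (2^m)) in Hm; auto. rewrite Rinv_l in Hm; lra. } nra. }
  split; [|split; [|split]]; auto.
  - apply INR_le. rewrite HI. simpl. apply IZR_le. lia.
  - apply INR_le. rewrite INR_pow2. apply (Rmult_le_reg_r (/ 2^m)).
    { apply Rinv_0_lt_compat; auto. } rewrite Rinv_r by lra. unfold Rdiv in Hlt. lra.
  - rewrite HI. apply (Rmult_lt_reg_r (2^m)); auto.
    replace (IZR (up (s * 2 ^ m)) / 2 ^ m * 2 ^ m) with (IZR (up (s * 2 ^ m))) by (field; lra). lra.
Qed.
Definition Sset {X} (UU : rel X -> Prop) (V : nat -> rel X) (x y : X) : R -> Prop :=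
  fun r => r = 1 \/ exists k n, (1 <= k)%nat /\ (k <= 2 ^ n)%nat /\ r = INR k / 2 ^ n /\
           uclosure UU (ball x (E V k n)) y.

Definition gf {X} (UU : rel X -> Prop) (V : nat -> rel X) (x y : X) : R := infR (Sset UU V x y).

Definition good {X} (UU BB : rel X -> Prop) (V : nat -> rel X) : Prop :=
  (forall W, BB W -> UU W) /\ multiplicative BB /\ delta_rotund_base UU BB /\
  (forall n, BB (V n)) /\ (forall n x, V n x x) /\
  (forall n, rsubset (rcomp (V (S n)) (V (S n))) (V n)).

Lemma S_bounds {X} UU (V : nat -> rel X) x y r : Sset UU V x y r -> 0 <= r <= 1.
Proof.
  intros [-> | [k [n [H1 [H2 [-> _]]]]]]; [lra|].
  pose proof (pow2_pos n). apply le_INR in H2. rewrite INR_pow2 in H2.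
  pose proof (pos_INR k). split.
  - unfold Rdiv. apply Rmult_le_pos; [lra|]. left; apply Rinv_0_lt_compat; lra.
  - apply (Rmult_le_reg_r (2^n)); auto. unfold Rdiv. rewrite Rmult_assoc, Rinv_l; lra.
Qed.

Lemma S_one {X} UU (V : nat -> rel X) x y : Sset UU V x y 1.
Proof. left; reflexivity. Qed.

Lemma g_le {X} UU (V : nat -> rel X) x y r : Sset UU V x y r -> gf UU V x y <= r.
Proof. intro H. apply (infR_le _ 1); auto. intros; eapply S_bounds; eauto. apply S_one. Qed.

Lemma g_bounds {X} UU (V : nat -> rel X) x y : 0 <= gf UU V x y <= 1.
Proof. split. apply (infR_nonneg _ 1). intros; eapply S_bounds; eauto. apply S_one.
  apply g_le, S_one. Qed.

Lemma g_lt {X} UU (V : nat -> rel X) x y t : gf UU V x y < t -> exists r, Sset UU V x y r /\ r < t.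
Proof. intro H. apply (infR_lt _ 1); auto. intros; eapply S_bounds; eauto. apply S_one. Qed.

Lemma g_ge {X} UU (V : nat -> rel X) x y c : (forall r, Sset UU V x y r -> c <= r) -> c <= gf UU V x y.
Proof. intro H. apply (infR_ge _ 1); auto. intros; eapply S_bounds; eauto. apply S_one. Qed.

Lemma g_diag {X} UU BB (V : nat -> rel X) : good UU BB V -> forall x, gf UU V x x = 0.
Proof.
  intros [_ [_ [_ [_ [Hr _]]]]] x. pose proof (g_bounds UU V x x).
  destruct (Rle_lt_or_eq_dec 0 (gf UU V x x)) as [Hp|Hp]; [lra| |auto].
  exfalso. destruct (small_pow (gf UU V x x) 1) as [n Hn]; try lra.
  assert (gf UU V x x <= INR 1 / 2 ^ n).
  { apply g_le. right. exists 1%nat, n. repeat split; auto.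
    - assert (2 ^ n <> 0)%nat by (apply Nat.pow_nonzero; lia). lia.
    - apply cl_incl. unfold ball. apply E_refl; auto. }
  simpl INR in H0. lra.
Qed.

Lemma g_lip {X} UU BB (V : nat -> rel X) : good UU BB V ->
  forall m a b z, V m a b -> gf UU V z b <= gf UU V z a + 3 / 2 ^ m.
Proof.
  intros [HUB [Hm [Hrot [HB [Hr Hc]]]]] m a b z Hv.
  cut (gf UU V z b - 3 / 2 ^ m <= gf UU V z a). lra.
  apply g_ge. intros r Hs. pose proof (pow2_pos m).
  assert (H3 : 0 < 3 / 2 ^ m) by (apply Rdiv_lt_0_compat; lra).
  destruct Hs as [-> | [k [n [H1 [H2 [-> Hcl]]]]]].
  { pose proof (g_bounds UU V z b); lra. }
  destruct (ceil_ex k n m H1 H2) as [j [J1 [J2 [J3 J4]]]].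
  pose proof (real_ceil j k n m J4).
  enough (gf UU V z b <= INR (S (S j)) / 2 ^ m) by lra.
  assert (Hcl2 : uclosure UU (ball z (E V j m)) a).
  { eapply cl_mono; [|exact Hcl]. apply ball_mono. apply E_cross; auto. }
  assert (Hcl3 : uclosure UU (ball z (rcomp (rcomp (E V j m) (V m)) (V m))) b).
  { apply (Hrot z (V m) (E V j m) (V m)); auto. apply E_BB; auto. exists a; auto. }
  destruct (le_lt_dec (S (S j)) (2 ^ m)) as [Hle|Hgt].
  - apply g_le. right. exists (S (S j)), m. repeat split; auto; try lia.
    eapply cl_mono; [|exact Hcl3]. apply ball_mono.
    intros u w [t [[s [Hs1 Hs2]] Ht]]. apply (E_step V Hc m (S j)); [lia|].
    exists t. split; auto. apply (E_step V Hc m j); [lia|]. exists s; auto.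
  - pose proof (g_bounds UU V z b). assert (Hgt2 : (2 ^ m <= S (S j))%nat) by lia. apply le_INR in Hgt2. clear Hgt. rename Hgt2 into Hgt.
    rewrite INR_pow2 in Hgt. apply Rle_trans with 1; [lra|].
    apply (Rmult_le_reg_r (2^m)); auto. unfold Rdiv. rewrite Rmult_assoc, Rinv_l; lra.
Qed.

Lemma g_lsc {X} UU BB (V : nat -> rel X) : good UU BB V ->
  forall z y0 e, 0 < e -> exists W, UU W /\ forall y, W y0 y -> gf UU V z y0 - e < gf UU V z y.
Proof.
  intros Hg z y0 e He. pose proof Hg as [HUB [Hm [Hrot [HB [Hr Hc]]]]].
  set (s := gf UU V z y0 - e).
  destruct (Rlt_dec s 0) as [Hs|Hs].
  { exists (V 0%nat). split; auto. intros y _. pose proof (g_bounds UU V z y). unfold s in *; lra. }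
  pose proof (g_bounds UU V z y0).
  destruct (dyadic_between s (gf UU V z y0)) as [k [n [K1 [K2 [K3 K4]]]]]; unfold s in *; try lra.
  set (A := fun y => gf UU V z y <= s).
  assert (HA : ~ uclosure UU A y0).
  { intro HA. assert (Hc0 : uclosure UU (ball z (E V k n)) y0).
    { apply cl_idem. eapply cl_mono; [|exact HA]. intros y Hy. unfold A in Hy.
      destruct (g_lt UU V z y (INR k / 2 ^ n)) as [r [Hr1 Hr2]]. unfold s in *; lra.
      destruct Hr1 as [-> | [k' [n' [L1 [L2 [-> Lcl]]]]]]. lra.
      eapply cl_mono; [|exact Lcl]. apply ball_mono. apply E_cross; auto.
      apply dy_lt; auto. }
    assert (gf UU V z y0 <= INR k / 2 ^ n) by (apply g_le; right; exists k, n; auto). lra. }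
  unfold uclosure in HA. apply not_all_ex_not in HA. destruct HA as [W HW].
  apply imply_to_and in HW. destruct HW as [HWo HW]. apply imply_to_and in HW. destruct HW as [HWy HW].
  destruct (HWo y0 HWy) as [W' [HW'1 HW'2]]. exists W'. split; auto.
  intros y Hy. apply Rnot_le_lt. intro Hle. apply HW. exists y. split; [apply HW'2; exact Hy| exact Hle].
Qed.

Lemma g_int {X} UU BB (V : nat -> rel X) (U : rel X) : good UU BB V -> rsubset (V 0%nat) U ->
  forall x y, gf UU V x y < 1 -> uinterior UU (uclosure UU (ball x U)) y.
Proof.
  intros Hg HVU x y Hy. pose proof Hg as [HUB [Hm [Hrot [HB [Hr Hc]]]]].
  exists (fun w => gf UU V x w < 1). split; [|split; auto].
  - intros w Hw. destruct (small_pow (1 - gf UU V x w) 3) as [m Hm']; try lra.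
    exists (V m). split; auto. intros u Hu. pose proof (g_lip UU BB V Hg m w u x Hu). lra.
  - intros w Hw. destruct (g_lt UU V x w 1 Hw) as [r [[-> | [k [n [L1 [L2 [-> Lcl]]]]]] Hr2]]. lra.
    eapply cl_mono; [|exact Lcl]. apply ball_mono.
    intros a b h. apply HVU. rewrite <- (E_top V n). apply (E_mono V Hr Hc n k); auto.
Qed.
Lemma Rmax_tri a b c : Rmax 0 (c - a) <= Rmax 0 (b - a) + Rmax 0 (c - b).
Proof. unfold Rmax; repeat destruct Rle_dec; lra. Qed.

Lemma common3 {X} (UU : rel X -> Prop) (HQ : is_quasi_uniformity UU) A B :
  UU A -> UU B -> exists W, UU W /\ rsubset W A /\ rsubset W B.
Proof. destruct HQ as [_ [_ [H _]]]. apply H. Qed.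


Definition pq {X} (g : X -> X -> R) (x y : X) : R :=
  supR (fun r => exists z, r = Rmax 0 (g z y - g z x)).
Definition ps {X} (g : X -> X -> R) (x y : X) : R :=
  supR (fun r => exists z, r = Rabs (g z y - g z x)).

Lemma tq_b {X} (g : X -> X -> R) (gb : forall x y, 0 <= g x y <= 1) x y r :
  (exists z, r = Rmax 0 (g z y - g z x)) -> r <= 1.
Proof. intros [z ->]. pose proof (gb z y); pose proof (gb z x). unfold Rmax; destruct Rle_dec; lra. Qed.
Lemma ts_b {X} (g : X -> X -> R) (gb : forall x y, 0 <= g x y <= 1) x y r :
  (exists z, r = Rabs (g z y - g z x)) -> r <= 1.
Proof. intros [z ->]. pose proof (gb z y); pose proof (gb z x). unfold Rabs; destruct Rcase_abs; lra. Qed.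

Lemma pq_ge {X} g (gb : forall x y : X, 0 <= g x y <= 1) x y z : Rmax 0 (g z y - g z x) <= pq g x y.
Proof. apply (supR_ge _ (Rmax 0 (g z y - g z x))); eauto. apply tq_b; auto. Qed.
Lemma pq_le {X} g (gb : forall x y : X, 0 <= g x y <= 1) x y c :
  (forall z, Rmax 0 (g z y - g z x) <= c) -> pq g x y <= c.
Proof. intro H. apply (supR_le _ (Rmax 0 (g x y - g x x))); eauto. apply tq_b; auto.
  intros r [z ->]; auto. Qed.
Lemma pq_gt {X} g (gb : forall x y : X, 0 <= g x y <= 1) x y t :
  t < pq g x y -> exists z, t < Rmax 0 (g z y - g z x).
Proof. intro H. destruct (supR_gt (fun r => exists z, r = Rmax 0 (g z y - g z x)) (Rmax 0 (g x y - g x x)) t) as [r [[z ->] Hr]]; eauto.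
  apply tq_b; auto. Qed.

Lemma ps_ge {X} g (gb : forall x y : X, 0 <= g x y <= 1) x y z : Rabs (g z y - g z x) <= ps g x y.
Proof. apply (supR_ge _ (Rabs (g z y - g z x))); eauto. apply ts_b; auto. Qed.
Lemma ps_le {X} g (gb : forall x y : X, 0 <= g x y <= 1) x y c :
  (forall z, Rabs (g z y - g z x) <= c) -> ps g x y <= c.
Proof. intro H. apply (supR_le _ (Rabs (g x y - g x x))); eauto. apply ts_b; auto.
  intros r [z ->]; auto. Qed.
Lemma ps_gt {X} g (gb : forall x y : X, 0 <= g x y <= 1) x y t :
  t < ps g x y -> exists z, t < Rabs (g z y - g z x).
Proof. intro H. destruct (supR_gt (fun r => exists z, r = Rabs (g z y - g z x)) (Rabs (g x y - g x x)) t) as [r [[z ->] Hr]]; eauto.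
  apply ts_b; auto. Qed.

Lemma quasi_from_g {X} (UU : rel X -> Prop) (HQ : is_quasi_uniformity UU) (V : nat -> rel X)
  (HV : forall n, UU (V n)) (g : X -> X -> R) (U : rel X)
  (gb : forall x y, 0 <= g x y <= 1) (gd : forall x, g x x = 0)
  (glip : forall m a b z, V m a b -> g z b <= g z a + 3 / 2 ^ m)
  (glsc : forall z y0 e, 0 < e -> exists W, UU W /\ forall y, W y0 y -> g z y0 - e < g z y)
  (gint : forall x y, g x y < 1 -> uinterior UU (uclosure UU (ball x U)) y) :
  exists p : X -> X -> R,
       unit_valued p /\ quasi_pseudometric p /\ uniform_premetric UU p /\
       right_continuous UU p /\
       forall x, subset (pball1 p x) (uinterior UU (uclosure UU (ball x U))).
Proof.
  assert (Hup : forall m a b, V m a b -> pq g a b <= 3 / 2 ^ m).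
  { intros m a b H. apply pq_le; auto. intro z. pose proof (glip m a b z H).
    pose proof (pow2_pos m). assert (0 < 3 / 2 ^ m) by (apply Rdiv_lt_0_compat; lra).
    unfold Rmax; destruct Rle_dec; lra. }
  assert (Htri : forall x y w, pq g x w <= pq g x y + pq g y w).
  { intros x y w. apply pq_le; auto. intro z. pose proof (Rmax_tri (g z x) (g z y) (g z w)).
    pose proof (pq_ge g gb x y z). pose proof (pq_ge g gb y w z). lra. }
  exists (pq g). split; [|split; [|split; [|split]]].
  - intros x y. split.
    + pose proof (pq_ge g gb x y x). pose proof (Rmax_l 0 (g x y - g x x)). lra.
    + apply pq_le; auto. intro z. apply (tq_b g gb x y); eauto.
  - split; auto. intro x. apply Rle_antisym.
    + apply pq_le; auto. intro z. replace (g z x - g z x) with 0 by ring. unfold Rmax; destruct Rle_dec; lra.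
    + pose proof (pq_ge g gb x x x). pose proof (Rmax_l 0 (g x x - g x x)). lra.
  - intros eps He. destruct (small_pow eps 3) as [m Hm]; try lra.
    destruct HQ as [_ [Hsup _]]. apply (Hsup (V m)); auto.
    intros a b H. pose proof (Hup m a b H). lra.
  - intros x O HO y0 Hy0. destruct (HO _ Hy0) as [e [He HOe]].
    destruct (small_pow e 3) as [m Hm]; try lra.
    destruct (pq_gt g gb x y0 (pq g x y0 - e / 2)) as [z Hz]; [lra|].
    destruct (glsc z y0 (e / 2)) as [W2 [HW2 HW2']]; [lra|].
    destruct (common3 UU HQ (V m) W2) as [W [HW [HW1 HW2'']]]; auto.
    exists W. split; auto. intros y Hy. apply HOe.
    pose proof (Htri x y0 y). pose proof (Hup m y0 y (HW1 _ _ Hy)).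
    pose proof (HW2' y (HW2'' _ _ Hy)). pose proof (pq_ge g gb x y z).
    assert (pq g x y0 - e < pq g x y).
    { revert Hz H2. unfold Rmax; repeat destruct Rle_dec; intros; lra. }
    unfold Rabs; destruct Rcase_abs; lra.
  - intros x y Hy. apply gint. unfold pball1 in Hy. pose proof (pq_ge g gb x y x).
    rewrite gd in H. pose proof (Rmax_r 0 (g x y - 0)). lra.
Qed.

Lemma sym_from_g {X} (UU : rel X -> Prop) (HQ : is_uniformity UU) (V : nat -> rel X)
  (HV : forall n, UU (V n)) (g : X -> X -> R) (U : rel X)
  (gb : forall x y, 0 <= g x y <= 1) (gd : forall x, g x x = 0)
  (glip : forall m a b z, V m a b -> g z b <= g z a + 3 / 2 ^ m)
  (glsc : forall z y0 e, 0 < e -> exists W, UU W /\ forall y, W y0 y -> g z y0 - e < g z y)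
  (gint : forall x y, g x y < 1 -> uinterior UU (uclosure UU (ball x U)) y) :
  exists p : X -> X -> R,
       unit_valued p /\ pseudometric p /\ uniform_premetric UU p /\
       right_continuous UU p /\
       forall x, subset (pball1 p x) (uinterior UU (uclosure UU (ball x U))).
Proof.
  destruct HQ as [HQ Hinv].
  assert (HS : forall m, exists W, UU W /\ forall a b, W a b -> V m a b /\ V m b a).
  { intro m. destruct (common3 UU HQ (V m) (rinv (V m))) as [W [HW [H1 H2]]]; auto.
    exists W; split; auto. intros a b H; split; auto. apply (H2 a b H). }
  assert (Hup : forall m a b, V m a b -> V m b a -> ps g a b <= 3 / 2 ^ m).
  { intros m a b H H'. apply ps_le; auto. intro z. pose proof (glip m a b z H).
    pose proof (glip m b a z H'). unfold Rabs; destruct Rcase_abs; lra. }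
  assert (Htri : forall x y w, ps g x w <= ps g x y + ps g y w).
  { intros x y w. apply ps_le; auto. intro z.
    pose proof (Rabs_triang (g z y - g z x) (g z w - g z y)).
    replace (g z y - g z x + (g z w - g z y)) with (g z w - g z x) in H by ring.
    pose proof (ps_ge g gb x y z). pose proof (ps_ge g gb y w z). lra. }
  assert (Hsym : forall x y, ps g x y <= ps g y x).
  { intros x y. apply ps_le; auto. intro z. rewrite Rabs_minus_sym. apply ps_ge; auto. }
  exists (ps g). split; [|split; [|split; [|split]]].
  - intros x y. split.
    + pose proof (ps_ge g gb x y x). pose proof (Rabs_pos (g x y - g x x)). lra.
    + apply ps_le; auto. intro z. apply (ts_b g gb x y); eauto.
  - split; [split|].
    + intro x. apply Rle_antisym.
      * apply ps_le; auto. intro z. replace (g z x - g z x) with 0 by ring. rewrite Rabs_R0; lra.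
      * pose proof (ps_ge g gb x x x). pose proof (Rabs_pos (g x x - g x x)). lra.
    + auto.
    + intros x y. apply Rle_antisym; auto.
  - intros eps He. destruct (small_pow eps 3) as [m Hm]; try lra.
    destruct (HS m) as [W [HW HW']].
    destruct HQ as [_ [Hsup _]]. apply (Hsup W); auto.
    intros a b H. destruct (HW' a b H). pose proof (Hup m a b H0 H1). lra.
  - intros x O HO y0 Hy0. destruct (HO _ Hy0) as [e [He HOe]].
    destruct (small_pow (e / 2) 3) as [m Hm]; try lra.
    destruct (HS m) as [W1 [HW1 HW1']].
    destruct (ps_gt g gb x y0 (ps g x y0 - e / 2)) as [z Hz]; [lra|].
    destruct (glsc z y0 (e / 2)) as [W2 [HW2 HW2']]; [lra|].
    destruct (common3 UU HQ W1 W2) as [W [HW [HWa HWb]]]; auto.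
    exists W. split; auto. intros y Hy. apply HOe.
    destruct (HW1' y0 y (HWa _ _ Hy)) as [Hv1 Hv2].
    pose proof (Htri x y0 y). pose proof (Hup m y0 y Hv1 Hv2).
    pose proof (HW2' y (HWb _ _ Hy)). pose proof (glip m y0 y z Hv1).
    pose proof (ps_ge g gb x y z).
    assert (ps g x y0 - e < ps g x y).
    { revert Hz H3. unfold Rabs; repeat destruct Rcase_abs; intros; lra. }
    unfold Rabs at 1; destruct Rcase_abs; lra.
  - intros x y Hy. apply gint. unfold pball1 in Hy. pose proof (ps_ge g gb x y x).
    rewrite gd in H. rewrite Rminus_0_r in H. pose proof (Rle_abs (g x y)). lra.
Qed.
Lemma seq_exists {A : Type} (P : A -> Prop) (Rl : A -> A -> Prop) (a0 : A) :
  P a0 -> (forall a, P a -> exists b, P b /\ Rl b a) ->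
  exists f : nat -> A, f 0%nat = a0 /\ forall n, P (f n) /\ Rl (f (S n)) (f n).
Proof.
  intros H0 Hs.
  pose (nxt := fun s : {a | P a} =>
    let (b, Hb) := constructive_indefinite_description _ (Hs (proj1_sig s) (proj2_sig s)) in
    exist P b (proj1 Hb)).
  assert (Hn : forall s, Rl (proj1_sig (nxt s)) (proj1_sig s)).
  { intro s. unfold nxt. destruct (constructive_indefinite_description _ _) as [b [Hb1 Hb2]]. exact Hb2. }
  exists (fun n => proj1_sig (nat_rect (fun _ => {a | P a}) (exist P a0 H0) (fun _ s => nxt s) n)).
  split; [reflexivity|]. intro n. split.
  - apply proj2_sig.
  - simpl. apply Hn.
Qed.

Lemma core {X} (UU : rel X -> Prop) (HQ : is_quasi_uniformity UU) (HD : delta_rotund UU)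
  (U : rel X) (HU : UU U) :
  exists (V : nat -> rel X) (g : X -> X -> R),
    (forall n, UU (V n)) /\ (forall x y, 0 <= g x y <= 1) /\ (forall x, g x x = 0) /\
    (forall m a b z, V m a b -> g z b <= g z a + 3 / 2 ^ m) /\
    (forall z y0 e, 0 < e -> exists W, UU W /\ forall y, W y0 y -> g z y0 - e < g z y) /\
    (forall x y, g x y < 1 -> uinterior UU (uclosure UU (ball x U)) y).
Proof.
  destruct HD as [BB [[HB1 HB2] [Hm Hrot]]].
  destruct (HB2 U HU) as [W0 [HW0 HW0U]].
  destruct HQ as [Hrefl [Hsup [Hcap Hhalf]]] eqn:HQe.
  destruct (seq_exists BB (fun b a => rsubset (rcomp b b) a) W0 HW0) as [V [HV0 HV]].
  { intros a Ha. destruct (Hhalf a (HB1 a Ha)) as [c [Hc1 Hc2]].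
    destruct (HB2 c Hc1) as [b [Hb1 Hb2]]. exists b. split; auto.
    intros x y [t [H1 H2]]. apply Hc2. exists t; auto. }
  assert (Hg : good UU BB V).
  { repeat split; auto.
    - intro n. apply (HV n).
    - intros n x. apply (Hrefl (V n)). apply HB1. apply (HV n).
    - intro n. apply (HV n). }
  assert (HVU : rsubset (V 0%nat) U) by (rewrite HV0; auto).
  exists V, (gf UU V). split; [|split; [|split; [|split; [|split]]]].
  - intro n. apply HB1, (HV n).
  - apply g_bounds.
  - apply (g_diag UU BB V Hg).
  - apply (g_lip UU BB V Hg).
  - apply (g_lsc UU BB V Hg).
  - apply (g_int UU BB V U Hg HVU).
Qed.

Theorem corollary2p14 :
  (forall (X : Type) (UU : rel X -> Prop),
     is_quasi_uniformity UU -> delta_rotund UU ->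
     forall U, UU U ->
     exists p : X -> X -> R,
       unit_valued p /\ quasi_pseudometric p /\ uniform_premetric UU p /\
       right_continuous UU p /\
       forall x, subset (pball1 p x) (uinterior UU (uclosure UU (ball x U))))
  /\
  (forall (X : Type) (UU : rel X -> Prop),
     is_uniformity UU -> delta_rotund UU ->
     forall U, UU U ->
     exists p : X -> X -> R,
       unit_valued p /\ pseudometric p /\ uniform_premetric UU p /\
       right_continuous UU p /\
       forall x, subset (pball1 p x) (uinterior UU (uclosure UU (ball x U)))).
Proof.
  split.
  - intros X UU HQ HD U HU.
    destruct (core UU HQ HD U HU) as [V [g [HV [gb [gd [gl [gs gi]]]]]]].
    exact (quasi_from_g UU HQ V HV g U gb gd gl gs gi).
  - intros X UU HQ HD U HU.
    destruct (core UU (proj1 HQ) HD U HU) as [V [g [HV [gb [gd [gl [gs gi]]]]]]].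
    exact (sym_from_g UU HQ V HV g U gb gd gl gs gi).
Qed.
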